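(* Let $\lambda>0$, let ${\mathbf{C}}_{\min}\le{\mathbf{C}}_{\max}$ be real symmetric $d\times d$ matrices and ${\mathbf{b}}_{\min}\le{\mathbf{b}}_{\max}$ vectors in $\mathbb{R}^d$. For fixed ${\boldsymbol{\theta}}\in\mathbb{R}^d$, the inner maximization problem $$\max_{{\mathbf{C}},{\mathbf{b}}}\ {\boldsymbol{\theta}}^T{\mathbf{C}}{\boldsymbol{\theta}}-2{\mathbf{b}}^T{\boldsymbol{\theta}}+\lambda\|{\boldsymbol{\theta}}\|_2^2\quad\text{s.t.}\quad {\mathbf{C}}_{\min}\le{\mathbf{C}}\le{\mathbf{C}}_{\max},\ {\mathbf{b}}_{\min}\le{\mathbf{b}}\le{\mathbf{b}}_{\max},\ {\mathbf{C}}\succeq0$$ can be equivalently formulated as $$\min_{{\mathbf{A}},{\mathbf{B}},{\mathbf{d}},{\mathbf{e}},{\mathbf{H}}}\ -\langle{\mathbf{b}}_{\min},{\mathbf{d}}\rangle+\langle{\mathbf{b}}_{\max},{\mathbf{e}}\rangle-\langle{\mathbf{C}}_{\min},{\mathbf{A}}\rangle+\langle{\mathbf{C}}_{\max},{\mathbf{B}}\rangle+\lambda\|{\boldsymbol{\theta}}\|^2$$ $$\text{s.t.}\quad -{\boldsymbol{\theta}}{\boldsymbol{\theta}}^T-{\mathbf{A}}+{\mathbf{B}}-{\mathbf{H}}=0,\quad 2{\boldsymbol{\theta}}-{\mathbf{d}}+{\mathbf{e}}=0,\quad {\mathbf{A}},{\mathbf{B}},{\mathbf{d}},{\mathbf{e}}\ge0,\quad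 {\mathbf{H}}\succeq0.$$ Therefore the min-max problem $\min_{{\boldsymbol{\theta}}}\max_{{\mathbf{C}},{\mathbf{b}}}$ of the first objective over the first constraint set can be alternatively written as the single minimization of the second objective over ${\boldsymbol{\theta}},{\mathbf{A}},{\mathbf{B}},{\mathbf{d}},{\mathbf{e}},{\mathbf{H}}$ subject to the same constraints.
   Context: Matrix and vector inequalities ($\le$, $\ge0$) are entrywise; $\succeq$ is the positive semidefinite order; $\langle\cdot,\cdot\rangle$ is the Euclidean/Frobenius inner product. ${\mathbf{A}},{\mathbf{B}},{\mathbf{H}}$ range over $d\times d$ matrices and ${\mathbf{d}},{\mathbf{e}}$ over $\mathbb{R}^d$. In the paper ${\mathbf{C}}_{\min}={\mathbf{C}}_0-c\boldsymbol{\Delta}$, ${\mathbf{C}}_{\max}={\mathbf{C}}_0+c\boldsymbol{\Delta}$, ${\mathbf{b}}_{\min}={\mathbf{b}}_0-c\boldsymbol{\delta}$, ${\mathbf{b}}_{\max}={\mathbf{b}}_0+c\boldsymbol{\delta}$ are confidence bounds for the second moments ${\mathbf{X}}^T{\mathbf{X}}$, ${\mathbf{X}}^T{\mathbf{y}}$ of a data set with missing entries. *)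

(* Defs.v *)
From HB Require Import structures.
From mathcomp Require Import all_boot all_order all_algebra.
From mathcomp Require Import all_classical all_reals.
From mathcomp Require Import ereal.
Set Implicit Arguments. Unset Strict Implicit. Unset Printing Implicit Defensive.
Import Order.TTheory GRing.Theory Num.Theory.
Local Open Scope ring_scope.
Local Open Scope classical_set_scope.

Section Defs.
Variables (R : realType) (d : nat).

Definition mx_le (m n : nat) (A B : 'M[R]_(m, n)) : Prop :=
  forall i j, A i j <= B i j.

Definition sym_mx (A : 'M[R]_d) : Prop := A^T = A.

Definition psd (A : 'M[R]_d) : Prop :=
  sym_mx A /\ forall x : 'cV[R]_d, 0 <= (x^T *m A *m x) 0 0.

Definition frob (m n : nat) (A B : 'M[R]_(m, n)) : R :=
  \sum_(i < m) \sum_(j < n) A i j * B i j.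

Definition qform (C : 'M[R]_d) (x : 'cV[R]_d) : R := (x^T *m C *m x) 0 0.

Definition sqnorm (x : 'cV[R]_d) : R := \sum_(i < d) x i 0 ^+ 2.

Definition primal_obj (lam : R) (th : 'cV[R]_d) (C : 'M[R]_d) (b : 'cV[R]_d) : R :=
  qform C th - 2 * frob b th + lam * sqnorm th.

Definition primal_feas (Cmin Cmax : 'M[R]_d) (bmin bmax : 'cV[R]_d)
    (C : 'M[R]_d) (b : 'cV[R]_d) : Prop :=
  [/\ mx_le Cmin C, mx_le C Cmax, mx_le bmin b, mx_le b bmax & psd C].

Definition dual_obj (lam : R) (Cmin Cmax : 'M[R]_d) (bmin bmax : 'cV[R]_d)
    (th : 'cV[R]_d) (A B : 'M[R]_d) (dv e : 'cV[R]_d) : R :=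
  - frob bmin dv + frob bmax e - frob Cmin A + frob Cmax B + lam * sqnorm th.

Definition dual_feas (th : 'cV[R]_d) (A B : 'M[R]_d) (dv e : 'cV[R]_d)
    (H : 'M[R]_d) : Prop :=
  [/\ (- (th *m th^T) - A + B - H = 0),
      2 *: th - dv + e = 0,
      mx_le 0 A, mx_le 0 B &
      [/\ mx_le 0 dv, mx_le 0 e & psd H]].

Definition inner_max (lam : R) (Cmin Cmax : 'M[R]_d) (bmin bmax th : 'cV[R]_d)
  : \bar R :=
  ereal_sup [set x : \bar R | exists C b,
      primal_feas Cmin Cmax bmin bmax C b /\ x = (primal_obj lam th C b)%:E].

Definition inner_min (lam : R) (Cmin Cmax : 'M[R]_d) (bmin bmax th : 'cV[R]_d)
  : \bar R :=
  ereal_inf [set x : \bar R | exists A B dv e H,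
      dual_feas th A B dv e H /\
      x = (dual_obj lam Cmin Cmax bmin bmax th A B dv e)%:E].

End Defs.

(* Main.v *)
Require Import Defs.
From HB Require Import structures.
From mathcomp Require Import all_boot all_order all_algebra.
From mathcomp Require Import all_classical all_reals.
From mathcomp Require Import ereal.
From mathcomp Require Import ring lra zify.
Import Order.TTheory GRing.Theory Num.Theory.
Local Open Scope ring_scope.
Local Open Scope classical_set_scope.
Set Implicit Arguments. Unset Strict Implicit. Unset Printing Implicit Defensive.
Section HB.
Variables (R : realType) (V : lmodType R) (p : V -> R).
Hypothesis psub : forall x y, p (x + y) <= p x + p y.
Hypothesis phom : forall (a : R) x, 0 < a -> p (a *: x) = a * p x.

Lemma p0 : p 0 = 0.
Proof.
have := phom (0 : V) (ltr0n R 2); rewrite scaler0 => h; lra.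
Qed.

Lemma hb_ext (W : V -> R -> Prop) :
  W 0 0 -> (forall x a y b, W x a -> W y b -> W (x + y) (a + b)) ->
  (forall k x a, 0 < k -> W x a -> W (k *: x) (k * a)) ->
  (forall x a, W x a -> a <= p x) ->
  forall v, exists g, forall x a tau, W x a -> a + tau * g <= p (x + tau *: v).
Proof.
move=> W0 WD WZ Wp v.
pose A := [set r | exists x a, W x a /\ r = a - p (x - v)].
have key : forall x a y b, W x a -> W y b -> a - p (x - v) <= p (y + v) - b.
  move=> x a y b Wa Wb; have := Wp _ _ (WD _ _ _ _ Wa Wb).
  have := psub (x - v) (y + v).
  rewrite (_ : x - v + (y + v) = x + y); last by rewrite addrACA addNr addr0.
  lra.
have ub : forall y b, W y b -> ubound A (p (y + v) - b).
  by move=> y b Wb r [x [a [Wa ->]]]; exact: key.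
have hs : has_sup A.
  split; first by exists (0 - p (0 - v)); exists 0, 0.
  by exists (p (0 + v) - 0); exact: ub.
exists (sup A) => x a tau Wa.
case: (ltgtP tau 0) => htau.
- have sp : 0 < - tau by rewrite oppr_gt0.
  have ip : 0 < (- tau)^-1 by rewrite invr_gt0.
  have W' := WZ _ _ _ ip Wa.
  have h : (- tau)^-1 * a - p ((- tau)^-1 *: x - v) <= sup A.
    by apply: sup_upper_bound => //; exists ((- tau)^-1 *: x), ((- tau)^-1 * a).
  have e : x + tau *: v = (- tau) *: ((- tau)^-1 *: x - v).
    by rewrite scalerBr scalerA divff ?gt_eqF // scale1r scaleNr opprK.
  rewrite e phom //.
  have := ler_wpM2l (ltW sp) h; rewrite mulrBr mulrA divff ?gt_eqF // mul1r.
  lra.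
- have ip : 0 < tau^-1 by rewrite invr_gt0.
  have W' := WZ _ _ _ ip Wa.
  have h : sup A <= p (tau^-1 *: x + v) - tau^-1 * a.
    apply: ge_sup; first by case: hs.
    exact: ub W'.
  have e : x + tau *: v = tau *: (tau^-1 *: x + v).
    by rewrite scalerDr scalerA divff ?gt_eqF // scale1r.
  rewrite e phom //.
  have := ler_wpM2l (ltW htau) h; rewrite mulrBr mulrA divff ?gt_eqF // mul1r.
  lra.
- by rewrite htau mul0r addr0 scale0r addr0; exact: Wp.
Qed.

Lemma hb_base x0 t0 : t0 * p x0 <= p (t0 *: x0).
Proof.
case: (ltgtP t0 0) => ht.
- have sp : 0 < - t0 by rewrite oppr_gt0.
  have := psub (t0 *: x0) ((- t0) *: x0).
  rewrite -scalerDl addrN scale0r p0 (phom _ sp); lra.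
- by rewrite phom.
- by rewrite ht mul0r scale0r p0.
Qed.

Lemma hb_seq (I : eqType) (v : I -> V) x0 (s : seq I) : uniq s ->
  exists c : I -> R, forall t0 (t : I -> R),
    t0 * p x0 + \sum_(i <- s) t i * c i <= p (t0 *: x0 + \sum_(i <- s) t i *: v i).
Proof.
elim: s => [|j s IH] /=.
  by move=> _; exists (fun=> 0) => t0 t; rewrite !big_nil !addr0; exact: hb_base.
case/andP => js us; have [c hc] := IH us.
pose W x a := exists t0 (t : I -> R), x = t0 *: x0 + \sum_(i <- s) t i *: v i /\
   a = t0 * p x0 + \sum_(i <- s) t i * c i.
have W0 : W 0 0.
  exists 0, (fun=> 0); rewrite scale0r mul0r !add0r.
  by split; rewrite big1 // => i _; rewrite ?scale0r ?mul0r.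
have WD : forall x a y b, W x a -> W y b -> W (x + y) (a + b).
  move=> x a y b [t0 [t [-> ->]]] [u0 [u [-> ->]]].
  exists (t0 + u0), (fun i => t i + u i); split.
    rewrite scalerDl.
    under [X in _ = _ + X]eq_bigr do rewrite scalerDl.
    rewrite big_split /=; by rewrite addrACA.
  rewrite mulrDl.
  under [X in _ = _ + X]eq_bigr do rewrite mulrDl.
  rewrite big_split /=; by rewrite addrACA.
have WZ : forall k x a, 0 < k -> W x a -> W (k *: x) (k * a).
  move=> k x a _ [t0 [t [-> ->]]]; exists (k * t0), (fun i => k * t i); split.
    rewrite scalerDr scalerA scaler_sumr; congr (_ + _).
    by apply: eq_bigr => i _; rewrite scalerA.
  rewrite mulrDr mulrA mulr_sumr; congr (_ + _).
  by apply: eq_bigr => i _; rewrite mulrA.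
have Wp : forall x a, W x a -> a <= p x.
  by move=> x a [t0 [t [-> ->]]]; exact: hc.
have [g hg] := hb_ext W0 WD WZ Wp (v j).
exists (fun i => if i == j then g else c i) => t0 t.
rewrite !big_cons eqxx.
rewrite (@eq_big_seq _ _ _ _ _ (fun i => t i * (if i == j then g else c i))
   (fun i => t i * c i)); last first.
  move=> i iS; case: eqP => // eij; by move: js; rewrite -eij iS.
have := hg (t0 *: x0 + \sum_(i <- s) t i *: v i)
   (t0 * p x0 + \sum_(i <- s) t i * c i) (t j).
move=> h.
have eV : t0 *: x0 + (t j *: v j + \sum_(i <- s) t i *: v i) =
   (t0 *: x0 + \sum_(i <- s) t i *: v i) + t j *: v j.
  by rewrite addrCA addrC.
rewrite eV; have := h (ex_intro _ t0 (ex_intro _ t (conj erefl erefl))); lra.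
Qed.

End HB.
Section Mx.
Variables (R : realType) (d : nat).
Implicit Types (A B C H : 'M[R]_d) (x u : 'cV[R]_d).

Lemma quadE A x : (x^T *m A *m x) 0 0 = \sum_i \sum_j x i 0 * A i j * x j 0.
Proof.
rewrite mxE; under eq_bigr do rewrite mxE big_distrl /=.
rewrite exchange_big /=; apply: eq_bigr => i _; apply: eq_bigr => j _.
by rewrite mxE.
Qed.

Lemma qform_frob A x : (x^T *m A *m x) 0 0 = frob A (x *m x^T).
Proof.
rewrite quadE /frob; apply: eq_bigr => i _; apply: eq_bigr => j _.
rewrite mxE big_ord1 !mxE; ring.
Qed.

Lemma quad_add H x u t : H^T = H ->
  ((x + t *: u)^T *m H *m (x + t *: u)) 0 0 = (x^T *m H *m x) 0 0
   + 2 * t * (u^T *m H *m x) 0 0 + t ^+ 2 * (u^T *m H *m u) 0 0.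
Proof.
move=> sH.
have ex : (x^T *m H *m u) 0 0 = (u^T *m H *m x) 0 0.
  transitivity ((x^T *m H *m u)^T 0 0); first by rewrite [RHS]mxE.
  by rewrite !trmx_mul trmxK sH mulmxA.
rewrite linearD /= linearZ /= [(x + t *: u)^T]linearD /= [(t *: u)^T]linearZ /= !mulmxDl -!scalemxAl.
have addE : forall (A B : 'M[R]_1), (A + B) 0 0 = A 0 0 + B 0 0.
  by move=> *; rewrite mxE.
have scalE : forall (a : R) (A : 'M[R]_1), (a *: A) 0 0 = a * A 0 0.
  by move=> *; rewrite mxE.
rewrite !addE !scalE !addE !scalE ex.
ring.
Qed.

Lemma rowq H (r : 'I_d) x :
  ((delta_mx r (0 : 'I_1))^T *m H *m x) 0 0 = \sum_j H r j * x j 0.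
Proof.
by rewrite trmx_delta -rowE mxE; apply: eq_bigr => j _; rewrite mxE.
Qed.

Lemma rowq_delta H (r j : 'I_d) :
  ((delta_mx r (0 : 'I_1))^T *m H *m delta_mx j (0 : 'I_1)) 0 0 = H r j.
Proof.
rewrite rowq (bigD1 j) //= big1 => [|i /negbTE hi]; rewrite !mxE ?eqxx ?hi /=.
  by rewrite mulr1 addr0.
by rewrite mulr0.
Qed.

Lemma psd_sym H : psd H -> forall i j, H i j = H j i.
Proof. by case=> sH _ i j; rewrite -[in LHS]sH mxE. Qed.

End Mx.
Section Mx2.
Variables (R : realType) (d : nat).
Implicit Types (A B C H : 'M[R]_d) (x u : 'cV[R]_d).

Lemma quad_delta H (j : 'I_d) :
  ((delta_mx j (0 : 'I_1))^T *m H *m delta_mx j (0 : 'I_1)) 0 0 = H j j.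
Proof. exact: rowq_delta. Qed.

Lemma frob_psd C H : psd C -> psd H -> 0 <= frob C H.
Proof.
move=> hC.
suff: forall k (H : 'M[R]_d), psd H ->
    (forall i j : 'I_d, ((i < d - k)%N || (j < d - k)%N) -> H i j = 0) ->
    0 <= frob C H.
  by move=> /(_ d H) h hH; apply: h => // i j; rewrite subnn.
elim=> [|k IH] {}H hH supp.
  rewrite /frob big1 // => i _; rewrite big1 // => j _.
  by rewrite supp ?mulr0 // subn0 ltn_ord.
case: (ltnP k d) => hk; last first.
  apply: IH => // i j hij; apply: supp; move: hij.
  have -> : (d - k = 0)%N by apply/eqP; rewrite subn_eq0.
  by [].
have rlt : (d - k.+1 < d)%N by lia.
pose r := Ordinal rlt.
have rk : (d - k = r.+1)%N by rewrite /=; lia.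
have rk' : (d - k.+1 = r)%N by [].
have Hs := psd_sym hH.
have [sH qH] := hH.
pose u : 'cV[R]_d := delta_mx r 0.
have Hrr0 : 0 <= H r r by rewrite -(quad_delta H r); exact: qH.
have supp' : forall i j : 'I_d, (i < r)%N -> H i j = 0.
  by move=> i j hi; apply: supp; rewrite rk' hi.
case: (eqVneq (H r r) 0) => hrr.
- have hr0 : forall j, H r j = 0.
    move=> j; apply/eqP/negP => nb.
    pose t := - (H j j + 1) / (2 * H r j).
    have := qH (delta_mx j 0 + t *: u).
    rewrite quad_add // /u !quad_delta rowq_delta hrr.
    have -> : H j j + 2 * t * H r j + t ^+ 2 * 0 = -1.
      by rewrite /t; field; apply/negP.
    lra.
  apply: IH => // i j; rewrite rk !ltnS [(i <= r)%N]leq_eqVlt [(j <= r)%N]leq_eqVlt.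
  case/orP => [/orP[/eqP ei | hi] | /orP[/eqP ej | hj]].
  + by have -> : i = r by apply/val_inj.
  + exact: supp'.
  + have -> : j = r by apply/val_inj.
    by rewrite Hs.
  + by rewrite Hs; exact: supp'.
- have hpos : 0 < H r r by rewrite lt_neqAle eq_sym hrr.
  pose h : 'cV[R]_d := (row r H)^T.
  pose H' := H - (H r r)^-1 *: (h *m h^T).
  have eH' : forall i j, H' i j = H i j - (H r r)^-1 * (H r i * H r j).
    by move=> i j; rewrite !mxE big_ord1 !mxE.
  have psdH' : psd H'.
    split.
      apply/matrixP => i j; rewrite mxE !eH' (Hs j i); congr (_ - _ * _).
      by rewrite mulrC.
    move=> x.
    pose hx := \sum_j H r j * x j 0.
    have eq : (x^T *m H' *m x) 0 0 = (x^T *m H *m x) 0 0 - (H r r)^-1 * (hx * hx).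
      rewrite !quadE /hx big_distrl /= mulr_sumr -sumrB; apply: eq_bigr => i _.
      rewrite big_distrr /= mulr_sumr -sumrB; apply: eq_bigr => j _.
      rewrite eH'; ring.
    have := qH (x + (- hx / H r r) *: u).
    rewrite quad_add // /u rowq quad_delta -/hx eq.
    have -> : (x^T *m H *m x) 0 0 + 2 * (- hx / H r r) * hx + (- hx / H r r) ^+ 2 * H r r
      = (x^T *m H *m x) 0 0 - (H r r)^-1 * (hx * hx).
      field; exact: hrr.
    by [].
  have suppH' : forall i j : 'I_d, ((i < d - k)%N || (j < d - k)%N) -> H' i j = 0.
    move=> i j; rewrite eH' rk !ltnS [(i <= r)%N]leq_eqVlt [(j <= r)%N]leq_eqVlt.
    case/orP => [/orP[/eqP ei | hi] | /orP[/eqP ej | hj]].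
    + have -> : i = r by apply/val_inj.
      field; exact: hrr.
    + have z1 : H i j = 0 by exact: supp'.
      have z2 : H r i = 0 by rewrite Hs; exact: supp'.
      by rewrite z1 z2 mul0r mulr0 subr0.
    + have -> : j = r by apply/val_inj.
      rewrite (Hs i r); field; exact: hrr.
    + have z1 : H i j = 0 by rewrite Hs; exact: supp'.
      have z2 : H r j = 0 by rewrite Hs; exact: supp'.
      by rewrite z1 z2 mulr0 mulr0 subr0.
  have split_ : frob C H = frob C H' + (H r r)^-1 * frob C (h *m h^T).
    rewrite /frob mulr_sumr -big_split; apply: eq_bigr => i _.
    rewrite mulr_sumr -big_split; apply: eq_bigr => j _.
    rewrite eH' !mxE big_ord1 !mxE /=; field; exact: hrr.
  rewrite split_ -qform_frob; apply: addr_ge0; first exact: IH.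
  by apply: mulr_ge0; [rewrite invr_ge0 ltW | case: hC => _; apply].
Qed.

End Mx2.
Lemma mxE_add (R : realType) m n (A B : 'M[R]_(m, n)) i j : (A + B) i j = A i j + B i j.
Proof. by rewrite mxE. Qed.
Lemma mxE_scale (R : realType) m n (k : R) (A : 'M[R]_(m, n)) i j : (k *: A) i j = k * A i j.
Proof. by rewrite mxE. Qed.
Lemma mxE_opp (R : realType) m n (A : 'M[R]_(m, n)) i j : (- A) i j = - A i j.
Proof. by rewrite mxE. Qed.

Section Mx3.
Variables (R : realType) (d : nat).
Implicit Types (A B C H : 'M[R]_d) (x u : 'cV[R]_d).

Lemma psd0 : psd (0 : 'M[R]_d).
Proof.
split; first by rewrite /sym_mx trmx0.
by move=> x; rewrite mulmx0 mul0mx mxE.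
Qed.

Lemma psdD H1 H2 : psd H1 -> psd H2 -> psd (H1 + H2).
Proof.
case=> s1 q1 [s2 q2]; split; first by rewrite /sym_mx linearD /= s1 s2.
by move=> x; rewrite mulmxDr mulmxDl mxE_add addr_ge0.
Qed.

Lemma psdZ k H : 0 <= k -> psd H -> psd (k *: H).
Proof.
move=> hk [s q]; split; first by rewrite /sym_mx linearZ /= s.
by move=> x; rewrite -scalemxAr -scalemxAl mxE_scale mulr_ge0.
Qed.

Lemma psd_xx x : psd (x *m x^T).
Proof.
split; first by rewrite /sym_mx trmx_mul trmxK.
move=> y; rewrite !mulmxA -[y^T *m x *m x^T *m y]mulmxA mxE big_ord1.
have -> : (x^T *m y) 0 0 = (y^T *m x) 0 0.
  by rewrite -[in LHS](trmxK y) -trmx_mul [LHS]mxE.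
by rewrite -expr2 sqr_ge0.
Qed.

Lemma frob_delta X (k : R) (i j : 'I_d) : frob X (k *: delta_mx i j) = X i j * k.
Proof.
rewrite /frob (bigD1 i) //= [X in _ + X]big1 ?addr0; last first.
  move=> a ha; rewrite big1 // => b _; rewrite !mxE.
  by rewrite (negbTE ha) /= mulr0 mulr0.
rewrite (bigD1 j) //= [X in _ + X]big1 ?addr0; last first.
  by move=> b hb; rewrite !mxE (negbTE hb) andbF mulr0 mulr0.
by rewrite !mxE !eqxx /= mulr1.
Qed.

Lemma weak_dual lam Cmin Cmax (bmin bmax th : 'cV[R]_d) C b A B dv e H :
  primal_feas Cmin Cmax bmin bmax C b -> dual_feas th A B dv e H ->
  primal_obj lam th C b <= dual_obj lam Cmin Cmax bmin bmax th A B dv e.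
Proof.
case=> hCl hCu hbl hbu hC [hM hd hA hB [hdv he hH]].
rewrite /primal_obj /dual_obj /qform qform_frob.
have hCH := frob_psd hC hH.
move: (th *m th^T) hM => M hM.
have eM : forall i j, M i j = B i j - A i j - H i j.
  move=> i j; have := congr1 (fun X : 'M[R]_d => X i j) hM.
  rewrite !mxE_add !mxE_opp mxE; lra.
have eth : forall i j, th i j = (dv i j - e i j) / 2.
  move=> i j; have := congr1 (fun X : 'cV[R]_d => X i j) hd.
  rewrite !mxE_add !mxE_opp mxE_scale mxE => h.
  apply: (@mulIf _ 2); first by rewrite pnatr_eq0.
  rewrite mulfVK ?pnatr_eq0 //; lra.
have hCp : frob C M + frob C H <= frob Cmax B - frob Cmin A.
  rewrite /frob -big_split -sumrB; apply: ler_sum => i _.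
  rewrite -big_split -sumrB; apply: ler_sum => j _ /=.
  have h1 : 0 <= (Cmax i j - C i j) * B i j by apply: mulr_ge0; rewrite ?subr_ge0 //; by move: (hB i j); rewrite mxE.
  have h2 : 0 <= (C i j - Cmin i j) * A i j by apply: mulr_ge0; rewrite ?subr_ge0 //; by move: (hA i j); rewrite mxE.
  rewrite mulrBl in h1; rewrite mulrBl in h2.
  rewrite eM !mulrBr; lra.
have hbp : - (2 * frob b th) <= - frob bmin dv + frob bmax e.
  rewrite /frob mulr_sumr -sumrN -sumrN -big_split; apply: ler_sum => i _.
  rewrite mulr_sumr -sumrN -sumrN -big_split; apply: ler_sum => j _ /=.
  have h1 : 0 <= (b i j - bmin i j) * dv i j by apply: mulr_ge0; rewrite ?subr_ge0 //; by move: (hdv i j); rewrite mxE.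
  have h2 : 0 <= (bmax i j - b i j) * e i j by apply: mulr_ge0; rewrite ?subr_ge0 //; by move: (he i j); rewrite mxE.
  rewrite mulrBl in h1; rewrite mulrBl in h2.
  have -> : - (2 * (b i j * th i j)) = b i j * e i j - b i j * dv i j.
    by rewrite eth; field.
  lra.
lra.
Qed.

End Mx3.
Lemma max_split (R : realType) (a b n : R) : a <= b ->
  b * Num.max n 0 - a * Num.max (- n) 0 = Num.max (b * n) (a * n).
Proof.
move=> hab; have [hn|hn] : 0 <= n \/ n < 0 by case: (lerP 0 n); [left|right].
- have e1 : Num.max n 0 = n by apply/max_idPl.
  have e2 : Num.max (- n) 0 = 0 by apply/max_idPr; rewrite oppr_le0.
  have e3 : Num.max (b * n) (a * n) = b * n by apply/max_idPl; rewrite ler_wpM2r.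
  rewrite e1 e2 e3; lra.
- have e1 : Num.max n 0 = 0 by apply/max_idPr; rewrite ltW.
  have e2 : Num.max (- n) 0 = - n by apply/max_idPl; rewrite oppr_ge0 ltW.
  have e3 : Num.max (b * n) (a * n) = a * n by apply/max_idPr; rewrite ler_wnM2r // ltW.
  rewrite e1 e2 e3; lra.
Qed.

Lemma max_pn (R : realType) (n : R) : Num.max n 0 - Num.max (- n) 0 = n.
Proof. by have := @max_split R 1 1 n (lexx _); rewrite !mul1r maxxx. Qed.

Section Main.
Variables (R : realType) (d : nat) (Cmin Cmax : 'M[R]_d).
Hypotheses (smin : sym_mx Cmin) (smax : sym_mx Cmax) (hle : mx_le Cmin Cmax).

Definition phi (N : 'M[R]_d) : R :=
  \sum_i \sum_j Num.max (Cmax i j * N i j) (Cmin i j * N i j).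

Lemma phi_sub x y : phi (x + y) <= phi x + phi y.
Proof.
rewrite /phi -big_split; apply: ler_sum => i _.
rewrite -big_split; apply: ler_sum => j _ /=; rewrite mxE_add ge_max.
apply/andP; split; rewrite mulrDr; apply: lerD; rewrite le_max lexx ?orbT //.
Qed.

Lemma phi_hom k x : 0 <= k -> phi (k *: x) = k * phi x.
Proof.
move=> hk; rewrite /phi mulr_sumr; apply: eq_bigr => i _.
rewrite mulr_sumr; apply: eq_bigr => j _.
by rewrite mxE_scale maxr_pMr // [Cmax i j * _]mulrCA [Cmin i j * _]mulrCA.
Qed.

Lemma phi0 : phi 0 = 0.
Proof. by have := phi_hom 0 (lexx 0); rewrite scale0r mul0r. Qed.

Lemma phi_tr N : phi N^T = phi N.
Proof.
rewrite /phi exchange_big /=; apply: eq_bigr => i _; apply: eq_bigr => j _.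
rewrite mxE; congr (Num.max (_ * _) (_ * _)).
  by rewrite -[in LHS]smax mxE.
by rewrite -[in LHS]smin mxE.
Qed.

Lemma phi_delta (k : R) (i j : 'I_d) :
  phi (k *: delta_mx i j) = Num.max (Cmax i j * k) (Cmin i j * k).
Proof.
rewrite /phi (bigD1 i) //= [X in _ + X]big1 ?addr0; last first.
  move=> a ha; rewrite big1 // => b _; rewrite !mxE.
  by rewrite (negbTE ha) /= !mulr0 maxxx.
rewrite (bigD1 j) //= [X in _ + X]big1 ?addr0; last first.
  by move=> b hb; rewrite !mxE (negbTE hb) andbF !mulr0 maxxx.
by rewrite !mxE !eqxx /= mulr1.
Qed.

Definition posm (N : 'M[R]_d) : 'M[R]_d := \matrix_(i, j) Num.max (N i j) 0.
Definition negm (N : 'M[R]_d) : 'M[R]_d := \matrix_(i, j) Num.max (- N i j) 0.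

Lemma frob_posneg N : frob Cmax (posm N) - frob Cmin (negm N) = phi N.
Proof.
rewrite /frob -sumrB; apply: eq_bigr => i _; rewrite -sumrB; apply: eq_bigr => j _.
by rewrite !mxE max_split.
Qed.

End Main.
Section Final.
Variables (R : realType) (d : nat) (lam : R) (Cmin Cmax : 'M[R]_d) (bmin bmax : 'cV[R]_d).
Hypotheses (smin : sym_mx Cmin) (smax : sym_mx Cmax) (hle : mx_le Cmin Cmax)
  (hble : mx_le bmin bmax).
Variable th : 'cV[R]_d.

Let M := th *m th^T.
Let dstar : 'cV[R]_d := \matrix_(i, j) (2 * Num.max (th i j) 0).
Let estar : 'cV[R]_d := \matrix_(i, j) (2 * Num.max (- th i j) 0).
Let bstar : 'cV[R]_d := \matrix_(i, j) (if 0 <= th i j then bmin i j else bmax i j).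
Let Kc := - frob bmin dstar + frob bmax estar + lam * sqnorm th.
Let phi := phi Cmin Cmax.

Lemma min_ub (H : 'M[R]_d) : psd H -> (inner_min lam Cmin Cmax bmin bmax th <= (phi (M + H) + Kc)%:E)%E.
Proof.
move=> hH; apply: ereal_inf_lbound.
exists (negm (M + H)), (posm (M + H)), dstar, estar, H; split.
  split.
  - rewrite /M; move: (th *m th^T) => M0.
    apply/matrixP => i j; rewrite !mxE_add !mxE_opp /negm /posm !mxE.
    have := max_pn (M0 i j + H i j); lra.
  - apply/matrixP => i j; rewrite !mxE_add !mxE_opp mxE_scale /dstar /estar !mxE.
    have := max_pn (th i j); lra.
  - by move=> i j; rewrite !mxE le_max lexx orbT.
  - by move=> i j; rewrite !mxE le_max lexx orbT.
  - split; last exact: hH.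
    + by move=> i j; rewrite !mxE mulr_ge0 // le_max lexx orbT.
    + by move=> i j; rewrite !mxE mulr_ge0 // le_max lexx orbT.
congr EFin; rewrite /dual_obj /Kc /phi -(frob_posneg hle); lra.
Qed.

Lemma bstar_val : - (2 * frob bstar th) = - frob bmin dstar + frob bmax estar.
Proof.
rewrite /frob mulr_sumr -sumrN -sumrN -big_split; apply: eq_bigr => i _.
rewrite mulr_sumr -sumrN -sumrN -big_split; apply: eq_bigr => j _ /=.
rewrite !mxE; case: ifP => h.
- have e1 : Num.max (th i j) 0 = th i j by apply/max_idPl.
  have e2 : Num.max (- th i j) 0 = 0 by apply/max_idPr; rewrite oppr_le0.
  rewrite e1 e2; ring.
- have hn : th i j < 0 by rewrite ltNge h.
  have e1 : Num.max (th i j) 0 = 0 by apply/max_idPr; rewrite ltW.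
  have e2 : Num.max (- th i j) 0 = - th i j by apply/max_idPl; rewrite oppr_ge0 ltW.
  rewrite e1 e2; ring.
Qed.

Lemma bstar_feas : mx_le bmin bstar /\ mx_le bstar bmax.
Proof.
split=> i j; rewrite !mxE; case: ifP => _ //; exact: hble.
Qed.

Lemma max_lb (C : 'M[R]_d) : primal_feas Cmin Cmax bmin bmax C bstar ->
  ((frob C M + Kc)%:E <= inner_max lam Cmin Cmax bmin bmax th)%E.
Proof.
move=> hf; apply: ereal_sup_ubound; exists C, bstar; split => //.
congr EFin; rewrite /primal_obj /qform qform_frob /Kc -/M.
have := bstar_val; lra.
Qed.

Lemma inner_eq : inner_max lam Cmin Cmax bmin bmax th = inner_min lam Cmin Cmax bmin bmax th.
Proof.
apply/eqP; rewrite eq_le; apply/andP; split.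
  apply: ge_ereal_sup => x [C [b [hf ->]]].
  apply: le_ereal_inf_tmp => y [A [B [dv [e [H [hd ->]]]]]].
  rewrite lee_fin; exact: (weak_dual lam hf hd).
case: (pselect (forall N, exists m, forall H, psd H -> m <= phi (N + H))) => [LB|nLB].
- pose S N := [set r | exists H, psd H /\ r = phi (N + H)].
  pose g N := inf (S N).
  have g_le : forall N H, psd H -> g N <= phi (N + H).
    move=> N H hH; apply: ge_inf; last by exists H.
    have [m hm] := LB N; exists m => r [H' [hH' ->]]; exact: hm.
  have g_ge : forall N m, (forall H, psd H -> m <= phi (N + H)) -> m <= g N.
    move=> N m hm; apply: lb_le_inf.
      by exists (phi (N + 0)), 0; split; [exact: psd0|].
    by move=> r [H [hH ->]]; exact: hm.
  have g_sub : forall x y, g (x + y) <= g x + g y.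
    move=> x y.
    have h1 : forall H1 H2, psd H1 -> psd H2 -> g (x + y) <= phi (x + H1) + phi (y + H2).
      move=> H1 H2 p1 p2; apply: le_trans (g_le _ _ (psdD p1 p2)) _.
      rewrite addrACA; exact: phi_sub.
    have h2 : forall H2, psd H2 -> g (x + y) - phi (y + H2) <= g x.
      move=> H2 p2; apply: g_ge => H1 p1; have := h1 _ _ p1 p2; lra.
    have h3 : g (x + y) - g x <= g y.
      apply: g_ge => H2 p2; have := h2 _ p2; lra.
    lra.
  have g_le_hom : forall k x, 0 < k -> g (k *: x) <= k * g x.
    move=> k x hk.
    have : k^-1 * g (k *: x) <= g x.
      apply: g_ge => H hH; have := g_le (k *: x) (k *: H) (psdZ (ltW hk) hH).
      rewrite -scalerDr /phi phi_hom; last by rewrite ltW.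
      move=> h.
      apply: (le_trans (ler_wpM2l _ h)); first by rewrite invr_ge0 ltW.
      by rewrite mulKf ?gt_eqF.
    move=> h; have := ler_wpM2l (ltW hk) h.
    by rewrite mulrA divff ?gt_eqF // mul1r.
  have g_hom : forall k x, 0 < k -> g (k *: x) = k * g x.
    move=> k x hk; apply/eqP; rewrite eq_le g_le_hom //=.
    have ik : 0 < k^-1 by rewrite invr_gt0.
    have := g_le_hom _ (k *: x) ik; rewrite scalerA mulVf ?gt_eqF // scale1r => h.
    have := ler_wpM2l (ltW hk) h; rewrite mulrA divff ?gt_eqF // mul1r.
    by [].
  have g_phi : forall N, g N <= phi N.
    by move=> N; have := g_le N 0 (@psd0 R d); rewrite addr0.
  have g_tr1 : forall N, g N^T <= g N.
    move=> N; apply: g_ge => H hH; apply: le_trans (g_le _ _ hH) _.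
    have -> : N^T + H = (N + H)^T by rewrite linearD /= hH.1.
    by rewrite /phi phi_tr.
  have g_tr : forall N, g N^T = g N.
    by move=> N; apply/eqP; rewrite eq_le g_tr1 /= -{1}(trmxK N) g_tr1.
  have := @hb_seq R _ g g_sub g_hom _ (fun ij : ('I_d * 'I_d)%type => delta_mx ij.1 ij.2) M
     _ (index_enum_uniq _).
  move=> [c hc].
  pose L (N : 'M[R]_d) := \sum_i \sum_j N i j * c (i, j).
  have hcN : forall t0 N, t0 * g M + L N <= g (t0 *: M + N).
    move=> t0 N; have := hc t0 (fun ij => N ij.1 ij.2).
    have -> : \sum_(i <- index_enum (('I_d * 'I_d)%type)) N i.1 i.2 * c i = L N.
      by rewrite /L pair_bigA; apply: eq_bigr => -[i j].
    have -> : \sum_(i <- index_enum (('I_d * 'I_d)%type)) N i.1 i.2 *: delta_mx i.1 i.2 = N.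
      by rewrite [RHS](matrix_sum_delta N) pair_bigA.
    by [].
  have LN : forall N, L (- N) = - L N.
    move=> N; rewrite /L -sumrN; apply: eq_bigr => i _; rewrite -sumrN.
    by apply: eq_bigr => j _; rewrite mxE mulNr.
  have hL : forall N, L N <= g N.
    by move=> N; have := hcN 0 N; rewrite mul0r add0r scale0r add0r.
  have g0 : g 0 = 0 by exact: p0 g_hom.
  have hLM : L M = g M.
    have h1 := hcN 1 (- M); have h2 := hcN (-1) M.
    rewrite scale1r subrr g0 LN in h1; rewrite scaleN1r addNr g0 in h2.
    lra.
  pose C' : 'M[R]_d := \matrix_(i, j) ((c (i, j) + c (j, i)) / 2).
  have frobC' : forall N, frob C' N = (L N + L N^T) / 2.
    move=> N.
    have eT : L N^T = \sum_i \sum_j N i j * c (j, i).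
      rewrite /L exchange_big; apply: eq_bigr => i _; apply: eq_bigr => j _.
      by rewrite mxE.
    rewrite eT /L -big_split mulr_suml; apply: eq_bigr => i _.
    rewrite -big_split mulr_suml; apply: eq_bigr => j _ /=.
    rewrite mxE; ring.
  have C'le : forall N, frob C' N <= g N.
    move=> N; rewrite frobC'; have := hL N; have := hL N^T; rewrite g_tr; lra.
  have MT : M^T = M by rewrite /M trmx_mul trmxK.
  have C'M : frob C' M = g M by rewrite frobC' MT hLM; field.
  have frobN : forall X N : 'M[R]_d, frob X (- N) = - frob X N.
    move=> X N; rewrite /frob -sumrN; apply: eq_bigr => i _; rewrite -sumrN.
    by apply: eq_bigr => j _; rewrite mxE mulrN.
  have feasC' : primal_feas Cmin Cmax bmin bmax C' bstar.
    have [bl bu] := bstar_feas.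
    split => //.
    - move=> i j; have := C'le ((-1) *: delta_mx i j); rewrite frob_delta.
      have := g_phi ((-1) *: delta_mx i j); rewrite /phi phi_delta.
      have -> : Num.max (Cmax i j * -1) (Cmin i j * -1) = - Cmin i j.
        apply/eqP; rewrite eq_le ge_max !mulrN1 lexx andbT lerN2 hle /=.
        by rewrite le_max lexx orbT.
      lra.
    - move=> i j; have := C'le (1 *: delta_mx i j); rewrite frob_delta.
      have := g_phi (1 *: delta_mx i j); rewrite /phi phi_delta.
      have -> : Num.max (Cmax i j * 1) (Cmin i j * 1) = Cmax i j.
        by rewrite !mulr1; apply/max_idPl; exact: hle.
      lra.
    - split.
        by apply/matrixP => i j; rewrite !mxE addrC.
      move=> x; rewrite qform_frob.
      have := C'le (- (x *m x^T)); rewrite frobN.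
      have := g_le (- (x *m x^T)) (x *m x^T) (psd_xx x).
      rewrite addNr /phi phi0; lra.
  apply: le_trans (max_lb feasC'); rewrite C'M.
  case E: (inner_min lam Cmin Cmax bmin bmax th) => [r| |] //.
  + rewrite lee_fin.
    have : r - Kc <= g M.
      apply: g_ge => H hH; have := min_ub hH; rewrite E lee_fin; lra.
    lra.
  + by have := min_ub (@psd0 R d); rewrite E.
  + by rewrite leNye.
- have [N hN] : exists N, ~ exists m, forall H, psd H -> m <= phi (N + H).
    by apply/existsNP.
  have hN' : forall m, exists H, psd H /\ phi (N + H) < m.
    move=> m; apply: contrapT => hno; apply: hN; exists m => H hH.
    rewrite leNgt; apply/negP => hlt; apply: hno; by exists H; split.
  have hb : forall r : R, (inner_min lam Cmin Cmax bmin bmax th <= r%:E)%E.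
    move=> r; have [H [hH hlt]] := hN' (r - Kc - phi (M - N)).
    apply: le_trans (min_ub hH) _; rewrite lee_fin.
    have := @phi_sub R d Cmin Cmax (M - N) (N + H).
    rewrite (_ : M - N + (N + H) = M + H); last by rewrite addrA subrK.
    rewrite /phi in hlt *; lra.
  case E: (inner_min lam Cmin Cmax bmin bmax th) hb => [r| |] hb.
  + have := hb (r - 1); rewrite lee_fin => h; exfalso; clear E hb; lra.
  + by have := hb 0.
  + by rewrite leNye.
Qed.

End Final.

Theorem theorem3 (R : realType) (d : nat) (lam : R)
    (Cmin Cmax : 'M[R]_d) (bmin bmax : 'cV[R]_d) :
  0 < lam ->
  sym_mx Cmin -> sym_mx Cmax ->
  mx_le Cmin Cmax -> mx_le bmin bmax ->
  (forall th : 'cV[R]_d,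
     inner_max lam Cmin Cmax bmin bmax th = inner_min lam Cmin Cmax bmin bmax th)
  /\
  ereal_inf [set v : \bar R | exists th : 'cV[R]_d,
                 v = inner_max lam Cmin Cmax bmin bmax th]
  = ereal_inf [set v : \bar R | exists (th : 'cV[R]_d) (A B : 'M[R]_d)
                 (dv e : 'cV[R]_d) (H : 'M[R]_d),
                 dual_feas th A B dv e H /\
                 v = (dual_obj lam Cmin Cmax bmin bmax th A B dv e)%:E].
Proof.
move=> _ smin smax hle hble.
have ie : forall th : 'cV[R]_d,
    inner_max lam Cmin Cmax bmin bmax th = inner_min lam Cmin Cmax bmin bmax th.
  by move=> th; apply: inner_eq.
split; first exact: ie.
apply/eqP; rewrite eq_le; apply/andP; split.
- apply: le_ereal_inf_tmp => v [th [A [B [dv [e [H [hd ->]]]]]]].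
  apply: le_trans; first by apply: ereal_inf_lbound; exists th.
  rewrite ie; apply: ereal_inf_lbound; by exists A, B, dv, e, H.
- apply: le_ereal_inf_tmp => v [th ->]; rewrite ie.
  apply: le_ereal_inf_tmp => w [A [B [dv [e [H [hd ->]]]]]].
  apply: ereal_inf_lbound; by exists th, A, B, dv, e, H.
Qed.
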